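(* There exists $c>0$ such that the following holds. Let $t\geq 2$ be an integer and let $\omega:2^{[t]}\to\mathbb{R}_{\geq 0}$ be a balanced weight function with $\omega(2^{[t]})\geq 9/10$. Then either (i) $\omega(\emptyset)\geq 1/10$ and $\omega([t])\geq 1/10$, or (ii) there exist a positive integer $s$ and pairwise disjoint families $\mathcal{A}_1,\dots,\mathcal{A}_s\subset 2^{[t]}$ such that $\sum_{i=1}^s\omega(\mathcal{A}_i)^c\geq 1$, and for all $1\leq i<j\leq s$, every $A\in\mathcal{A}_i$ is incomparable (with respect to inclusion) to every $B\in\mathcal{A}_j$.
   Context: $2^{[t]}$ is the family of all subsets of $[t]=\{1,\dots,t\}$, ordered by inclusion. For a weight function $\omega:2^{[t]}\to\mathbb{R}_{\geq0}$ and $\mathcal{A}\subset 2^{[t]}$, $\omega(\mathcal{A})=\sum_{A\in\mathcal{A}}\omega(A)$. For $i\in[t]$ let $F^-_t(i)=\{A\subset[t]: i\notin A\}$ and $F^+_t(i)=\{A\subset[t]: i\in A\}$. $\omega$ is balanced if $\omega(F^-_t(i))\leq 1/2$ and $\omega(F^+_t(i))\leq 1/2$ for every $i\in[t]$. *)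

(* Defs.v *)
From HB Require Import structures.
From mathcomp Require Import all_boot all_order all_algebra.
From mathcomp Require Import all_classical all_reals all_analysis.
Set Implicit Arguments. Unset Strict Implicit. Unset Printing Implicit Defensive.
Import Order.TTheory GRing.Theory Num.Theory.
Local Open Scope ring_scope.

Definition wt (R : realType) (t : nat) (w : {set 'I_t} -> R)
  (A : {set {set 'I_t}}) : R := \sum_(X in A) w X.

Definition Fminus (t : nat) (i : 'I_t) : {set {set 'I_t}} := [set X : {set 'I_t} | i \notin X].
Definition Fplus (t : nat) (i : 'I_t) : {set {set 'I_t}} := [set X : {set 'I_t} | i \in X].

Definition balanced (R : realType) (t : nat) (w : {set 'I_t} -> R) : Prop :=
  forall i : 'I_t, wt w (Fminus i) <= 1/2 /\ wt w (Fplus i) <= 1/2.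

Definition incomparable (T : finType) (X Y : {set T}) : bool :=
  ~~ (X \subset Y) && ~~ (Y \subset X).

(* Main.v *)
Require Import Defs.
From HB Require Import structures.
From mathcomp Require Import all_boot all_order all_algebra.
From mathcomp Require Import all_classical all_reals all_analysis.
From mathcomp Require Import ring lra.
Import Order.TTheory GRing.Theory Num.Theory.
Local Open Scope ring_scope.

Lemma set_fact (T : finType) (A S : {set T}) (k : T) : k \in S ->
  ([disjoint A & S :\ k] && ~~ [disjoint A & S]) = (A :&: S == [set k]).
Proof.
move=> kS; rewrite -!setI_eq0; apply/andP/eqP.
- case=> /eqP H1 /set0Pn [y]; rewrite inE => /andP [yA yS].
  apply/setP => x; rewrite !inE.
  have: x \in A :&: (S :\ k) = false by rewrite H1 inE.
  rewrite !inE.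
  case: (eqVneq x k) => [->|xk] /=; last by move=> ->.
  rewrite kS andbT => _.
  case: (eqVneq y k) => [<-//|yk].
  have: y \in A :&: (S :\ k) by rewrite !inE yk yA yS.
  by rewrite H1 inE.
- move=> H; split.
  + apply/eqP/setP => x; rewrite !inE.
    move/setP: H => /(_ x); rewrite !inE => Hx.
    by case: (eqVneq x k) => [_|xk]; [rewrite andbF | rewrite Hx (negbTE xk)].
  + rewrite H; apply/set0Pn; exists k; by rewrite set11.
Qed.

Lemma incomp_fact (T : finType) (A B S : {set T}) (k l : T) : k != l ->
  A :&: S = [set k] -> B :&: S = [set l] -> incomparable A B.
Proof.
move=> kl HA HB; rewrite /incomparable; apply/andP; split; apply/negP => sub.
- have : k \in A :&: S by rewrite HA set11.
  rewrite inE => /andP [kA kS].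
  have : k \in B :&: S by rewrite inE kS (fintype.subsetP sub _ kA).
  by rewrite HB inE (negbTE kl).
- have : l \in B :&: S by rewrite HB set11.
  rewrite inE => /andP [lB lS].
  have : l \in A :&: S by rewrite inE lS (fintype.subsetP sub _ lB).
  by rewrite HA inE eq_sym (negbTE kl).
Qed.

Lemma incomp_C (T : finType) (X Y : {set T}) :
  incomparable (~: X) (~: Y) -> incomparable X Y.
Proof. by rewrite /incomparable !finset.setCS andbC. Qed.

Definition qf {R : realType} {t} (w : {set 'I_t} -> R) (f : {set 'I_t} -> {set 'I_t})
  (Z : {set 'I_t}) : R := wt w [set X | [disjoint f X & Z]].
Definition Hf (R : realType) (n : nat) : R := if n is 0%N then 0 else (1 - n%:R^-1) / 4.
Definition Ef {t} (f : {set 'I_t} -> {set 'I_t}) (S : {set 'I_t}) (k : 'I_t) :=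
  [set X | f X :&: S == [set k]].

Lemma q_split (R : realType) t (w : {set 'I_t} -> R) f (S : {set 'I_t}) k : k \in S ->
  qf w f (S :\ k) = qf w f S + wt w (Ef f S k).
Proof.
move=> kS; rewrite /qf /wt (bigID (fun X => [disjoint f X & S])) /=.
congr (_ + _); apply: eq_bigl => X; rewrite !inE.
- apply/andP/idP => [[]//|H]; split => //; apply: disjointWr H; exact: subD1set.
- exact: set_fact.
Qed.

Lemma Hdiff (R : realType) (m : nat) :
  (m.+2%:R^-1) ^+ 3 <= Hf R m.+2 - Hf R m.+1 :> R.
Proof.
rewrite /Hf.
set x : R := m.+2%:R.
have x2 : 2 <= x by rewrite /x ler_nat.
have -> : m.+1%:R = x - 1 :> R.
  by rewrite /x -(addn1 m.+1) natrD addrK.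
have x0 : x != 0 by apply/eqP => h; lra.
have x10 : x - 1 != 0 by apply/eqP => h; lra.
clearbody x.
have -> : (1 - x^-1) / 4 - (1 - (x - 1)^-1) / 4 = ((4 * (x - 1) * x)^-1) :> R.
  by field; rewrite x0 x10.
rewrite exprVn lef_pV2 ?posrE.
  have h : 0 <= x * (x - 2) ^+ 2 by apply: mulr_ge0; [lra | exact: sqr_ge0].
  by nra.
- by apply: exprn_gt0; lra.
- by apply: mulr_gt0; [apply: mulr_gt0|]; lra.
Qed.

Lemma pow_step {R : realType} {x y : R} : 0 <= x -> x ^+ 3 <= y -> x <= y `^ (1/3).
Proof.
move=> x0 hy.
have y0 : 0 <= y by apply: le_trans hy; exact: exprn_ge0.
have := @ge0_ler_powR R (1/3) ltac:(lra) (x ^+ 3) y ltac:(by rewrite nnegrE exprn_ge0) ltac:(by rewrite nnegrE) hy.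
rewrite -powR_mulrn // -powRrM.
have -> : (3%:R * (1/3) : R) = 1 by field.
by rewrite powRr1.
Qed.

Lemma ar1 (R : realType) (a b : R) : a < 1/10 -> b <= 1/4 -> a + b < 2/5.
Proof. move=> *; lra. Qed.
Lemma ar2 (R : realType) (a : R) : a < 2/5 -> 2/5 <= a -> False.
Proof. move=> *; lra. Qed.
Lemma ar3 (R : realType) (a b d e x : R) : a + b <= a + e + d -> x <= b - d -> x <= e.
Proof. move=> *; lra. Qed.

Definition gf {R : realType} {t} (w : {set 'I_t} -> R) f (Z : {set 'I_t}) : R :=
  qf w f Z + Hf R #|Z|.

Lemma core (R : realType) t (w : {set 'I_t} -> R) (f : {set 'I_t} -> {set 'I_t}) :
  (forall X Y, incomparable (f X) (f Y) -> incomparable X Y) ->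
  2/5 <= qf w f finset.set0 ->
  (forall k, 2/5 <= qf w f [set k]) ->
  qf w f [set: 'I_t] < 1/10 ->
    (exists (s : nat) (A : 'I_s -> {set {set 'I_t}}),
        (0 < s)%N /\
        (forall i j : 'I_s, i != j -> [disjoint A i & A j]) /\
        1 <= \sum_(i < s) (wt w (A i)) `^ (1/3) /\
        (forall i j : 'I_s, (i < j)%N ->
           forall X Y, X \in A i -> Y \in A j -> incomparable X Y)).
Proof.
move=> hf h0 h1 hT.
have [S _ HS] := @arg_minP _ R _ finset.set0 predT (gf w f) isT.
have Hle : forall n, Hf R n <= 1/4.
  case=> [|n] /=; first lra.
  have : 0 <= n.+1%:R^-1 :> R by rewrite invr_ge0 ler0n.
  move: (n.+1%:R^-1 : R) => y ?; lra.
have gS : gf w f S < 2/5.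
  apply: le_lt_trans (HS [set: 'I_t] isT) _.
  rewrite /gf; exact: ar1.
have n2 : (2 <= #|S|)%N.
  case E: #|S| => [|[|n]] //.
  - move: gS; rewrite /gf E (cards0_eq E) /= addr0 => gS; exfalso; exact: ar2 gS h0.
  - move/eqP: E => /cards1P [k Sk]; move: gS.
    rewrite /gf Sk cards1 /Hf invr1 subrr mul0r addr0.
    move=> gS; exfalso; exact: ar2 gS (h1 k).
move: (n2); case E: #|S| => [|[|m]] // _.
have key : forall k, k \in S -> (m.+2%:R^-1) ^+ 3 <= wt w (Ef f S k) :> R.
  move=> k kS.
  have h := HS (S :\ k) isT; rewrite /gf (@q_split _ _ w f _ _ kS) in h.
  have c := cardsD1 k S; rewrite kS E add1n in c; case: c => c.
  rewrite -c E in h.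
  exact: ar3 h (Hdiff R m).
exists #|S|, (fun i => Ef f S (enum_val i)).
split; first by rewrite E.
split.
  move=> i j ij; rewrite -setI_eq0; apply/eqP/setP => X; rewrite !inE.
  apply/negP => /andP [/eqP h1' /eqP h2'].
  move: ij; rewrite -(inj_eq enum_val_inj).
  by rewrite -(inj_eq set1_inj) -h1' -h2' eqxx.
split.
  have x0 : 0 <= (m.+2%:R^-1 : R) by rewrite invr_ge0 ler0n.
  apply: (@le_trans _ _ (\sum_(i < #|S|) (m.+2%:R^-1 : R))).
    by rewrite sumr_const card_ord E -[leRHS]mulr_natr mulVf ?pnatr_eq0.
  apply: ler_sum => i _; apply: (pow_step x0); apply: key.
  exact: enum_valP.
move=> i j ij X Y; rewrite !inE => /eqP hX /eqP hY.
apply: hf; apply: (@incomp_fact _ _ _ S (enum_val i) (enum_val j) _ hX hY).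
rewrite (inj_eq enum_val_inj); apply/negP => /eqP e.
by move: ij; rewrite e ltnn.
Qed.

Lemma wt_split (R : realType) t (w : {set 'I_t} -> R) (k : 'I_t) :
  wt w [set: {set 'I_t}] = wt w (Fplus k) + wt w (Fminus k).
Proof.
rewrite /wt (bigID (fun X : {set 'I_t} => k \in X)) /=; congr (_ + _); apply: eq_bigl => X;
  by rewrite !inE.
Qed.

Lemma qf0 (R : realType) t (w : {set 'I_t} -> R) f : qf w f finset.set0 = wt w [set: {set 'I_t}].
Proof. rewrite /qf; congr wt; apply/setP => X; by rewrite !inE -setI_eq0 finset.setI0 eqxx. Qed.

Lemma qf1 (R : realType) t (w : {set 'I_t} -> R) f k :
  qf w f [set k] = wt w [set X | k \notin f X].
Proof. rewrite /qf; congr wt; apply/setP => X; by rewrite !inE disjoint_sym disjoints1. Qed.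

Lemma qfT (R : realType) t (w : {set 'I_t} -> R) f :
  qf w f [set: 'I_t] = wt w [set X | f X == finset.set0].
Proof. rewrite /qf; congr wt; apply/setP => X; by rewrite !inE -setI_eq0 finset.setIT. Qed.

Lemma wt1 (R : realType) t (w : {set 'I_t} -> R) X0 : wt w [set X0] = w X0.
Proof. by rewrite /wt big_set1. Qed.

Lemma ar6 (R : realType) (W : R) : 9/10 <= W -> 2/5 <= W.
Proof. move=> *; lra. Qed.

Lemma ar5 (R : realType) (W a b : R) : 9/10 <= W -> W = a + b -> a <= 1/2 -> 2/5 <= b.
Proof. move=> *; lra. Qed.

Theorem lemma4p2 (R : realType) :
  exists c : R, 0 < c /\
  forall (t : nat) (w : {set 'I_t} -> R),
    (2 <= t)%N ->
    (forall X, 0 <= w X) ->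
    balanced w ->
    9/10 <= wt w [set: {set 'I_t}] ->
    (1/10 <= w (finset.set0 : {set 'I_t}) /\ 1/10 <= w [set: 'I_t])
    \/
    (exists (s : nat) (A : 'I_s -> {set {set 'I_t}}),
        (0 < s)%N /\
        (forall i j : 'I_s, i != j -> [disjoint A i & A j]) /\
        1 <= \sum_(i < s) (wt w (A i)) `^ c /\
        (forall i j : 'I_s, (i < j)%N ->
           forall X Y, X \in A i -> Y \in A j -> incomparable X Y)).
Proof.
exists (1/3); split; first by rewrite divr_gt0 ?ltr01 ?ltr0n.
move=> t w t2 w0 bal W.
case: (boolP (w finset.set0 < 1/10)) => h.
  right; apply: (core _ _ w id) => //.
  - by rewrite qf0; exact: ar6.
  - move=> k; rewrite qf1; have [hm hp] := bal k.
    rewrite (_ : [set X : {set 'I_t} | k \notin id X] = Fminus k); last by apply/setP => X; rewrite !inE.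
    exact: (@ar5 _ _ _ _ W (wt_split _ _ w k)).
  - rewrite qfT (_ : [set X : {set 'I_t} | id X == finset.set0] = [set finset.set0]) ?wt1 //.
    by apply/setP => X; rewrite !inE.
case: (boolP (w [set: 'I_t] < 1/10)) => h'.
  right; apply: (core _ _ w (@finset.setC _)).
  - by move=> X Y; exact: incomp_C.
  - by rewrite qf0; exact: ar6.
  - move=> k; rewrite qf1; have [hm hp] := bal k.
    rewrite (_ : [set X : {set 'I_t} | k \notin ~: X] = Fplus k); last by apply/setP => X; rewrite !inE negbK.
    have e := wt_split _ _ w k; rewrite addrC in e.
    exact: (@ar5 _ _ _ _ W e).
  - rewrite qfT (_ : [set X : {set 'I_t} | ~: X == finset.set0] = [set [set: 'I_t]]) ?wt1 //.
    apply/setP => X; rewrite !inE -finset.setCT.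
    by rewrite (can_eq finset.setCK).
by left; split; rewrite leNgt.
Qed.
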